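(* Let $\varphi_{nc}(z)=\dfrac{1+z}{\cos z}$. For every $r\in(0,1)$, $$\min_{|z|=r}\operatorname{Re}\varphi_{nc}(z)=\varphi_{nc}(-r)\quad\text{and}\quad \max_{|z|=r}\operatorname{Re}\varphi_{nc}(z)=\varphi_{nc}(r).$$ *)

(* Defs.v *)
From Stdlib Require Import Reals.
From Coquelicot Require Import Coquelicot.
Open Scope R_scope.

Definition Cexp (z : C) : C :=
  (exp (Re z) * cos (Im z), exp (Re z) * sin (Im z)).

Definition Ccos (z : C) : C :=
  Cdiv (Cplus (Cexp (Cmult Ci z)) (Cexp (Copp (Cmult Ci z)))) (RtoC 2).

Definition phi_nc (z : C) : C := Cdiv (Cplus (RtoC 1) z) (Ccos z).

(* Main.v *)
Require Import Defs.
From Stdlib Require Import Reals Lra Psatz.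
From Coquelicot Require Import Coquelicot.
Open Scope R_scope.

Lemma mono_le (f df : R -> R) (a b : R) : a <= b ->
  (forall t, a <= t <= b -> is_derive f t (df t)) ->
  (forall t, a <= t <= b -> 0 <= df t) -> f a <= f b.
Proof.
  intros hab hd hp.
  destruct (MVT_gen f a b df) as [c [hc he]].
  - intros x hx. rewrite Rmin_left in hx by lra. rewrite Rmax_right in hx by lra.
    apply hd; lra.
  - intros x hx. rewrite Rmin_left in hx by lra. rewrite Rmax_right in hx by lra.
    apply continuity_pt_filterlim. apply (ex_derive_continuous (K:=R_AbsRing) (V:=R_NormedModule)).
    exists (df x). apply hd; lra.
  - rewrite Rmin_left in hc by lra. rewrite Rmax_right in hc by lra.
    assert (0 <= df c) by (apply hp; lra). nra.
Qed.

Lemma is_derive_cosh t : is_derive cosh t (sinh t).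
Proof. unfold cosh, sinh. auto_derive; [exact I | field]. Qed.
Lemma is_derive_sinh t : is_derive sinh t (cosh t).
Proof. unfold cosh, sinh. auto_derive; [exact I | field]. Qed.

Lemma cosh_ge1 t : 1 <= cosh t.
Proof.
  unfold cosh. assert (h := exp_pos t). assert (h2 := exp_pos (-t)).
  assert (exp t * exp (-t) = 1) by (rewrite <- exp_plus; replace (t + - t) with 0 by ring; apply exp_0).
  set (E := exp t) in *. set (F := exp (-t)) in *.
  assert (h4: 4 <= (E+F)*(E+F)). { pose proof (pow2_ge_0 (E-F)). nra. } nra.
Qed.

Ltac dv := intros; unfold cosh, sinh; auto_derive; [try exact I; auto | try field].

Lemma sinh_ge y : 0 <= y -> y <= sinh y.
Proof.
  intros hy.
  assert (h := mono_le (fun t => sinh t - t) (fun t => cosh t - 1) 0 y hy).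
  simpl in h. rewrite sinh_0 in h.
  enough (0 - 0 <= sinh y - y) by lra. apply h.
  - dv.
  - intros t _. pose proof (cosh_ge1 t). lra.
Qed.

Lemma cosh_ge2 y : 0 <= y -> 1 + y^2/2 <= cosh y.
Proof.
  intros hy.
  assert (h := mono_le (fun t => cosh t - 1 - t^2/2) (fun t => sinh t - t) 0 y hy).
  simpl in h. rewrite cosh_0 in h.
  enough (0 <= cosh y - 1 - y^2/2) by lra.
  replace 0 with (1 - 1 - 0 * (0 * 1) / 2) by field. apply h.
  - dv.
  - intros t ht. pose proof (sinh_ge t). lra.
Qed.

Lemma sinh_nonneg t : 0 <= t -> 0 <= sinh t.
Proof. intros. pose proof (sinh_ge t). lra. Qed.

Lemma cosh_le2 y : 0 <= y <= 1 -> cosh y <= 2.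
Proof.
  intros hy.
  assert (h := mono_le cosh sinh y 1 (proj2 hy)).
  assert (cosh 1 <= 2).
  { unfold cosh. pose proof exp_le_3. assert (exp (Ropp 1) < exp 0) by (apply exp_increasing; lra).
    rewrite exp_0 in H0. lra. }
  enough (cosh y <= cosh 1) by lra. apply h.
  - intros; apply is_derive_cosh.
  - intros t ht. apply sinh_nonneg. lra.
Qed.

Lemma sinh_le1 y : 0 <= y <= 1 -> sinh y <= 2*y.
Proof.
  intros hy.
  assert (h := mono_le (fun t => 2*t - sinh t) (fun t => 2 - cosh t) 0 y (proj1 hy)).
  simpl in h. rewrite sinh_0 in h.
  enough (2*0 - 0 <= 2*y - sinh y) by lra. apply h.
  - dv.
  - intros t ht. pose proof (cosh_le2 t). lra.
Qed.

Lemma cosh_le1 y : 0 <= y <= 1 -> cosh y <= 1 + y^2.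
Proof.
  intros hy.
  assert (h := mono_le (fun t => 1 + t^2 - cosh t) (fun t => 2*t - sinh t) 0 y (proj1 hy)).
  simpl in h. rewrite cosh_0 in h.
  enough (1 + 0*(0*1) - 1 <= 1 + y^2 - cosh y) by lra. apply h.
  - dv.
  - intros t ht. pose proof (sinh_le1 t). lra.
Qed.

Lemma sinh_le2 y : 0 <= y <= 1 -> sinh y <= y + y^3/3.
Proof.
  intros hy.
  assert (h := mono_le (fun t => t + t^3/3 - sinh t) (fun t => 1 + t^2 - cosh t) 0 y (proj1 hy)).
  simpl in h. rewrite sinh_0 in h.
  enough (0 + 0*(0*(0*1))/3 - 0 <= y + y^3/3 - sinh y) by lra. apply h.
  - dv.
  - intros t ht. pose proof (cosh_le1 t). lra.
Qed.

Lemma cosh_le3 y : 0 <= y <= 1 -> cosh y <= 1 + y^2/2 + y^4/12.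
Proof.
  intros hy.
  assert (h := mono_le (fun t => 1 + t^2/2 + t^4/12 - cosh t) (fun t => t + t^3/3 - sinh t) 0 y (proj1 hy)).
  simpl in h. rewrite cosh_0 in h.
  enough (1 + 0*(0*1)/2 + 0*(0*(0*(0*1)))/12 - 1 <= 1 + y^2/2 + y^4/12 - cosh y) by lra. apply h.
  - dv.
  - intros t ht. pose proof (sinh_le2 t). lra.
Qed.

Lemma sinh_le3 y : 0 <= y <= 1 -> sinh y <= y + y^3/6 + y^5/60.
Proof.
  intros hy.
  assert (h := mono_le (fun t => t + t^3/6 + t^5/60 - sinh t) (fun t => 1 + t^2/2 + t^4/12 - cosh t) 0 y (proj1 hy)).
  simpl in h. rewrite sinh_0 in h.
  enough (0 + 0*(0*(0*1))/6 + 0*(0*(0*(0*(0*1))))/60 - 0 <= y + y^3/6 + y^5/60 - sinh y) by lra. apply h.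
  - dv.
  - intros t ht. pose proof (cosh_le3 t). lra.
Qed.

Lemma sin_le_id t : 0 <= t -> sin t <= t.
Proof.
  intros ht. destruct (Req_dec t 0) as [->|]. rewrite sin_0; lra.
  pose proof (sin_lt_x t). lra.
Qed.

Lemma cos_lb2 r : 0 <= r <= 1 -> 1 - r^2/2 <= cos r.
Proof.
  intros hr. assert (hc: cos r = cos (2*(r/2))) by (f_equal; field). rewrite hc, cos_2a_sin.
  pose proof (sin_le_id (r/2)). pose proof PI2_1.
  assert (0 <= sin (r/2)) by (apply sin_ge_0; lra). nra.
Qed.

Lemma sin_lb3 a : 0 <= a <= 1 -> a - a^3/6 <= sin a.
Proof.
  intros ha.
  assert (h := mono_le (fun t => sin t - t + t^3/6) (fun t => cos t - 1 + t^2/2) 0 a (proj1 ha)).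
  simpl in h. rewrite sin_0 in h.
  enough (0 - 0 + 0*(0*(0*1))/6 <= sin a - a + a^3/6) by lra. apply h.
  - intros; auto_derive; [auto | field].
  - intros t ht. pose proof (cos_lb2 t). lra.
Qed.

Lemma cos_diff a r : 0 <= a <= r -> r <= 1 -> 0 <= cos a - cos r <= (r^2 - a^2)/2.
Proof.
  intros ha hr. rewrite form2. pose proof PI2_1.
  pose proof (sin_le_id ((a+r)/2)). pose proof (sin_le_id ((r-a)/2)).
  assert (0 <= sin ((a+r)/2)) by (apply sin_ge_0; lra).
  assert (0 <= sin ((r-a)/2)) by (apply sin_ge_0; lra).
  replace ((a - r)/2) with (- ((r-a)/2)) by field. rewrite sin_neg.
  split; nra.
Qed.

Lemma Ccos_eq x y : Ccos (x,y) = (cos x * cosh y, - (sin x * sinh y)).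
Proof.
  unfold Ccos, Cexp, Cdiv, Cmult, Cplus, Copp, Cinv, Ci, RtoC, Re, Im; simpl.
  replace (0 * x - 1 * y) with (-y) by ring.
  replace (0 * y + 1 * x) with x by ring.
  rewrite Ropp_involutive, cos_neg, sin_neg.
  unfold cosh, sinh. f_equal; field.
Qed.

Lemma phi_eq x y :
  let p := cos x * cosh y in let q := - (sin x * sinh y) in
  phi_nc (x,y) = (((1+x)*p + y*q)/(p^2+q^2), (y*p - (1+x)*q)/(p^2+q^2)).
Proof.
  intros p q. unfold phi_nc. rewrite Ccos_eq. fold p q.
  unfold Cdiv, Cmult, Cplus, Cinv, RtoC; simpl.
  f_equal; unfold Rdiv; ring.
Qed.

Lemma Q1 r : 0 <= r <= 1 -> let l := 1 - r^2/2 in 0 <= l*l + r*l*l - 388/100*r*(1-r).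
Proof. intros. subst l.
  assert (0 <= (1-r)^3) by (apply pow_le; lra).
  assert (0 <= r*(1-r)) by nra. assert (0 <= r^4) by (apply pow_le; lra). assert (0 <= r^5) by (apply pow_le; lra).
  lra. Qed.

Lemma Pb_pos r a cr : 0 < r < 1 -> 0 <= a <= r -> 1 - r^2/2 <= cr -> cr <= 1 ->
  0 <= cr*(cr - (1-r)*(r+a)/2) + (r+a)*(cr^2*(1-a)/2 + 5*a*cr/6 - 144/100*(1-r)).
Proof.
  intros hr ha hl hc. set (l := 1 - r^2/2) in *.
  assert (hl0 : 1/2 <= l) by (unfold l; nra).
  pose proof (Q1 r ltac:(lra)) as q. cbv zeta in q. fold l in q.
  assert (hl1 : l <= 1) by (unfold l; nra). clearbody l.
  assert (h1 : l*l <= cr*cr) by nra.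
  assert (hk : 0 <= (1-cr)*((1-r)*(r+a))) by (apply Rmult_le_pos; nra).
  assert (h2 : cr*(cr - (1-r)*(r+a)/2) >= l*l - (1-r)*(r+a)/2) by nra.
  assert (h3 : cr^2*(1-a)/2 + 5*a*cr/6 >= l*l/2).
  { assert (cr^2*(1-a)/2 + 5*a*cr/6 - cr^2/2 = a*cr*(5/6 - cr/2)) by (simpl; field).
    assert (0 <= a*cr*(5/6 - cr/2)) by (apply Rmult_le_pos; nra).
    assert (cr^2 = cr*cr) by ring. lra. }
  set (B := l*l/2 - 194/100*(1-r)).
  assert (h4 : 0 <= l*l + (r+a)*B).
  { 
    destruct (Rle_dec 0 B). nra.
    assert (l*l + 2*r*B <= l*l + (r+a)*B) by nra. unfold B in *. nra. }
  unfold B in h4. nra.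
Qed.

Lemma arith_neg r a y cr ca sa C S :
  0 < r < 1 -> 0 <= a -> a^2 + y^2 = r^2 -> 0 <= y -> 1 - r^2/2 <= cr -> cr <= 1 ->
  cr <= ca -> ca - cr <= y^2/2 -> ca <= 1 -> 1 + y^2/2 <= C -> y <= S -> S <= 12/10*y ->
  a - a^3/6 <= sa ->
  (1-r)*(ca^2 + S^2) <= cr*((1-a)*ca*C + y*sa*S).
Proof.
  intros hr ha hy2 hy hl hc1 hca hcd hca1 hC hS1 hS2 hsa.
  assert (har : a <= r) by nra.
  assert (hcr : 1/2 <= cr) by nra.
  assert (hsa2 : 5*a/6 <= sa).
  { assert (a^3 <= a) by (simpl; nra). lra. }
  assert (hSS : S^2 <= 144/100*y^2) by nra.
  assert (hC2 : cr*(1-a)*ca*C >= cr*(1-a)*ca*(1+y^2/2)).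
  { assert (0 <= cr*(1-a)*ca) by (repeat apply Rmult_le_pos; nra). nra. }
  assert (hyS : y*sa*S >= y^2*(5*a/6)).
  { assert (y*sa*S >= y*sa*y) by (assert (0 <= y*sa) by nra; nra).
    assert (y*sa*y >= y*(5*a/6)*y) by nra. simpl. nra. }
  set (inner := cr*(1-a) - (1-r)*ca).
  assert (hin : (r+a)*inner >= y^2*(cr - (1-r)*(r+a)/2)).
  { unfold inner.
    assert (e : (r+a)*(cr*(1-a) - (1-r)*ca) = cr*(r^2-a^2) - (r+a)*(1-r)*(ca - cr)) by ring.
    rewrite e. assert (r^2 - a^2 = y^2) by lra. rewrite H.
    assert ((r+a)*(1-r)*(ca-cr) <= (r+a)*(1-r)*(y^2/2)).
    { apply Rmult_le_compat_l. apply Rmult_le_pos; lra. lra. }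
    lra. }
  assert (hk : 0 <= cr - (1-r)*(r+a)/2) by nra.
  assert (hra : 0 < r + a) by lra.
  assert (hin0 : 0 <= inner).
  { assert (0 <= y^2*(cr - (1-r)*(r+a)/2)) by (apply Rmult_le_pos; [apply pow2_ge_0 | lra]).
    nra. }
  assert (hP := Pb_pos r a cr hr (conj ha har) hl hc1).
  assert (hmain : 0 <= ca*inner + cr*(1-a)*ca*(y^2/2) + cr*(y^2*(5*a/6)) - 144/100*(1-r)*y^2).
  { assert (h1 : ca*inner >= cr*inner) by nra.
    assert (h2 : cr*(1-a)*ca >= cr*(1-a)*cr).
    { assert (0 <= cr*(1-a)) by nra. nra. }
    assert (h3 : 0 <= y^2 * (cr*(cr - (1-r)*(r+a)/2) + (r+a)*(cr^2*(1-a)/2 + 5*a*cr/6 - 144/100*(1-r))))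
      by (apply Rmult_le_pos; [apply pow2_ge_0 | lra]).
    assert (h4 : 0 <= (r+a)*(ca*inner + cr*(1-a)*ca*(y^2/2) + cr*(y^2*(5*a/6)) - 144/100*(1-r)*y^2)).
    { assert (h5: (r+a)*(cr*(1-a)*ca*(y^2/2)) >= (r+a)*(cr*(1-a)*cr*(y^2/2))).
      { apply Rle_ge, Rmult_le_compat_l; [lra|]. apply Rmult_le_compat_r. nra. lra. }
      assert (h6: (r+a)*(ca*inner) >= (r+a)*(cr*inner)).
      { apply Rle_ge, Rmult_le_compat_l; lra. }
      assert (h7 : cr*((r+a)*inner) >= cr*(y^2*(cr - (1-r)*(r+a)/2))).
      { apply Rle_ge, Rmult_le_compat_l; lra. }
      assert (e1 : (r+a)*(ca*inner + cr*(1-a)*ca*(y^2/2) + cr*(y^2*(5*a/6)) - 144/100*(1-r)*y^2)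
        = (r+a)*(ca*inner) + (r+a)*(cr*(1-a)*ca*(y^2/2)) + (r+a)*(cr*(y^2*(5*a/6))) - (r+a)*(144/100*(1-r)*y^2)) by ring.
      assert (e2 : y^2 * (cr*(cr - (1-r)*(r+a)/2) + (r+a)*(cr^2*(1-a)/2 + 5*a*cr/6 - 144/100*(1-r)))
        = cr*(y^2*(cr - (1-r)*(r+a)/2)) + (r+a)*(cr*(1-a)*cr*(y^2/2)) + (r+a)*(cr*(y^2*(5*a/6))) - (r+a)*(144/100*(1-r)*y^2)) by field.
      assert (e3 : (r+a)*(cr*inner) = cr*((r+a)*inner)) by ring.
      lra. }
    nra. }
  assert (e : cr*((1-a)*ca*C + y*sa*S) - (1-r)*(ca^2 + S^2)
     = ca*inner + (cr*(1-a)*ca*C - cr*(1-a)*ca) + cr*(y*sa*S) - (1-r)*S^2) by (unfold inner; ring).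
  assert (cr*(y*sa*S) >= cr*(y^2*(5*a/6))) by (apply Rle_ge, Rmult_le_compat_l; lra).
  assert (e4 : cr*(1-a)*ca*(1+y^2/2) = cr*(1-a)*ca + cr*(1-a)*ca*(y^2/2)) by ring.
  assert ((1-r)*S^2 <= 144/100*(1-r)*y^2).
  { assert (e5 : 144/100*(1-r)*y^2 = (1-r)*(144/100*y^2)) by field. rewrite e5.
    apply Rmult_le_compat_l; lra. }
  lra.
Qed.

Lemma P2 r x : 0 < r < 1 -> 0 <= x <= r -> let l := 1 - r^2/2 in let y2 := r^2 - x^2 in
 0 <= l*(l*(1+x)*(1+y2/2) - (1-r)) - 12/10*l*x*y2 - 144/100*(1-r)*y2.
Proof. intros. subst l y2.
  assert (0 <= x*(r-x)) by nra.
  assert (0 <= r*(1-r)) by nra.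
  assert (0 <= x*(1-r)) by nra.
  assert (0 <= x*x*(r-x)) by nra.
  assert (0 <= x*r*(r-x)) by nra.
  assert (0 <= r*r*(1-r)) by nra.
  nra. Qed.

Lemma arith_pos r x y cr c s C S :
  0 < r < 1 -> 0 <= x -> x^2 + y^2 = r^2 -> 0 <= y -> 1 - r^2/2 <= cr -> cr <= 1 ->
  cr <= c -> c <= 1 -> 1 + y^2/2 <= C -> 0 <= s -> s <= x -> y <= S -> S <= 12/10*y ->
  (1-r)*(c^2 + S^2) <= cr*((1+x)*c*C - y*s*S).
Proof.
  intros hr hx hy2 hy hl hc1 hcc hc hC hs0 hs hS1 hS2.
  assert (hxr : x <= r) by nra.
  assert (hy1 : y^2 <= 1) by nra.
  pose proof (P2 r x hr (conj hx hxr)) as hp. cbv zeta in hp.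
  assert (e : r^2 - x^2 = y^2) by lra. rewrite e in hp.
  set (l := 1 - r^2/2) in *.
  assert (hl0 : 1/2 <= l) by (unfold l; nra). assert (hl2 : 1 - r <= l) by (unfold l; nra). clearbody l.
  assert (hcr : 1/2 <= cr) by lra.
  set (Z := cr*(1+x)*(1+y^2/2) - (1-r)).
  assert (hZ : 0 <= Z).
  { unfold Z. assert (hh: (1+x)*(1+y^2/2) >= 1) by nra.
    assert (cr*((1+x)*(1+y^2/2)) >= cr*1) by (apply Rle_ge, Rmult_le_compat_l; lra).
    assert (e0 : cr*(1+x)*(1+y^2/2) = cr*((1+x)*(1+y^2/2))) by ring. lra. }
  assert (hF : cr*Z - 12/10*cr*x*y^2 - 144/100*(1-r)*y^2 >= l*(l*(1+x)*(1+y^2/2) - (1-r)) - 12/10*l*x*y^2 - 144/100*(1-r)*y^2).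
  { assert (e2 : cr*Z - 12/10*cr*x*y^2 - 144/100*(1-r)*y^2 - (l*(l*(1+x)*(1+y^2/2) - (1-r)) - 12/10*l*x*y^2 - 144/100*(1-r)*y^2)
       = (cr - l)*((cr + l)*((1+x)*(1+y^2/2)) - (1-r) - 12/10*x*y^2)) by (unfold Z; field).
    assert (0 <= (cr + l)*((1+x)*(1+y^2/2)) - (1-r) - 12/10*x*y^2).
    { assert ((1+x)*(1+y^2/2) >= 1 + x) by nra.
      assert ((cr + l)*((1+x)*(1+y^2/2)) >= 1 + x) by nra.
      assert (x*y^2 <= x) by nra. lra. }
    assert (0 <= (cr - l)*((cr + l)*((1+x)*(1+y^2/2)) - (1-r) - 12/10*x*y^2)) by (apply Rmult_le_pos; lra).
    lra. }
  assert (h1 : (1+x)*c*C >= (1+x)*c*(1+y^2/2)).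
  { assert (0 <= (1+x)*c) by nra. nra. }
  assert (h2 : y*s*S <= 12/10*x*y^2).
  { assert (y*s*S <= y*x*S) by (assert (0 <= y*S) by nra; nra).
    assert (y*x*S <= y*x*(12/10*y)) by (assert (0 <= y*x) by nra; nra).
    assert (e3 : y*x*(12/10*y) = 12/10*x*y^2) by field. lra. }
  assert (h3 : (1-r)*S^2 <= 144/100*(1-r)*y^2).
  { assert (e5 : 144/100*(1-r)*y^2 = (1-r)*(144/100*y^2)) by field. rewrite e5.
    apply Rmult_le_compat_l; nra. }
  assert (h4 : (1-r)*c^2 <= (1-r)*c) by (apply Rmult_le_compat_l; nra).
  assert (h5 : c*Z >= cr*Z) by nra.
  assert (h6 : cr*((1+x)*c*C) >= cr*((1+x)*c*(1+y^2/2))) by (apply Rle_ge, Rmult_le_compat_l; lra).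
  assert (h7 : cr*(y*s*S) <= cr*(12/10*x*y^2)) by (apply Rmult_le_compat_l; lra).
  assert (e6 : cr*((1+x)*c*(1+y^2/2)) = c*Z + c*(1-r)) by (unfold Z; field).
  assert (e7 : cr*(12/10*x*y^2) = 12/10*cr*x*y^2) by field.
  assert (e8 : cr*((1+x)*c*C - y*s*S) = cr*((1+x)*c*C) - cr*(y*s*S)) by ring.
  lra.
Qed.

Lemma cosh_sinh_sq y : cosh y ^ 2 - sinh y ^ 2 = 1.
Proof.
  unfold cosh, sinh.
  assert (exp y * exp (-y) = 1) by (rewrite <- exp_plus; replace (y + - y) with 0 by ring; apply exp_0).
  simpl. nra.
Qed.

Lemma cosh_neg y : cosh (-y) = cosh y.
Proof. unfold cosh. rewrite Ropp_involutive. field. Qed.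
Lemma sinh_neg y : sinh (-y) = - sinh y.
Proof. unfold sinh. rewrite Ropp_involutive. field. Qed.

Lemma hyp_facts t : 0 <= t <= 1 -> 1 + t^2/2 <= cosh t /\ t <= sinh t /\ sinh t <= 12/10*t.
Proof.
  intros ht. split; [apply cosh_ge2; lra|]. split; [apply sinh_ge; lra|].
  pose proof (sinh_le3 t ht). assert (t^3 <= t) by (simpl; nra). assert (t^5 <= t) by (simpl; nra).
  lra.
Qed.

Lemma lower_pos_y r x y : 0 < r < 1 -> x^2 + y^2 = r^2 -> 0 <= y ->
  (1-r)*(cos x ^2 + sinh y ^2) <= cos r * ((1+x)*cos x*cosh y - y*sin x*sinh y).
Proof.
  intros hr hxy hy.
  assert (hy1 : y <= 1) by nra.
  destruct (hyp_facts y (conj hy hy1)) as [hC [hS1 hS2]].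
  pose proof (cos_lb2 r ltac:(lra)) as hcl.
  pose proof (COS_bound r) as hcb.
  destruct (Rle_or_lt x 0) as [hx|hx].
  - set (a := -x).
    assert (ha : 0 <= a) by (unfold a; lra).
    assert (ha2 : a^2 + y^2 = r^2) by (unfold a; rewrite <- hxy; ring).
    assert (har : a <= r) by nra.
    assert (ecx : cos x = cos a) by (unfold a; rewrite cos_neg; reflexivity).
    assert (esx : sin x = - sin a) by (unfold a; rewrite sin_neg; ring).
    rewrite ecx, esx.
    pose proof (cos_diff a r (conj ha har) ltac:(lra)) as hd.
    pose proof (COS_bound a) as hab.
    pose proof (sin_lb3 a ltac:(lra)) as hsl.
    assert (e : (1 + x) * cos a * cosh y - y * - sin a * sinh y = (1-a)*cos a*cosh y + y*sin a*sinh y)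
      by (unfold a; ring).
    rewrite e.
    apply (arith_neg r a y (cos r) (cos a) (sin a) (cosh y) (sinh y)); try lra.
  - assert (hxr : x <= r) by nra.
    pose proof (cos_diff x r (conj (Rlt_le _ _ hx) hxr) ltac:(lra)) as hd.
    pose proof (COS_bound x) as hab.
    pose proof (sin_le_id x ltac:(lra)).
    assert (0 <= sin x) by (apply sin_ge_0; pose proof PI2_1; lra).
    apply (arith_pos r x y (cos r) (cos x) (sin x) (cosh y) (sinh y)); try lra.
Qed.

Lemma lower_all r x y : 0 < r < 1 -> x^2 + y^2 = r^2 ->
  (1-r)*(cos x ^2 + sinh y ^2) <= cos r * ((1+x)*cos x*cosh y - y*sin x*sinh y).
Proof.
  intros hr hxy. destruct (Rle_or_lt 0 y) as [hy|hy].
  - apply lower_pos_y; auto.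
  - pose proof (lower_pos_y r x (-y) hr ltac:(rewrite <- hxy; ring) ltac:(lra)) as h.
    rewrite cosh_neg, sinh_neg in h.
    replace (sinh y ^ 2) with ((- sinh y)^2) by ring.
    replace (y * sin x * sinh y) with (- y * sin x * - sinh y) by ring. exact h.
Qed.

Theorem mainTheorem2 (r : R) (hr0 : 0 < r) (hr1 : r < 1) :
  Im (phi_nc (RtoC (- r))) = 0 /\ Im (phi_nc (RtoC r)) = 0 /\
  (forall z : C, Cmod z = r ->
     Re (phi_nc (RtoC (- r))) <= Re (phi_nc z) /\
     Re (phi_nc z) <= Re (phi_nc (RtoC r))).
Proof.
  pose proof (cos_lb2 r ltac:(lra)) as hcl.
  assert (hcr : 0 < cos r) by nra.
  assert (hm : phi_nc (RtoC (-r)) = ((1-r)/cos r, 0)).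
  { unfold RtoC. rewrite phi_eq. rewrite cosh_0, sinh_0, cos_neg, sin_neg.
    f_equal; field; lra. }
  assert (hp : phi_nc (RtoC r) = ((1+r)/cos r, 0)).
  { unfold RtoC. rewrite phi_eq. rewrite cosh_0, sinh_0.
    f_equal; field; lra. }
  rewrite hm, hp. split; [reflexivity|]. split; [reflexivity|].
  intros [x y] hz.
  unfold Cmod in hz. simpl in hz.
  assert (hxy : x^2 + y^2 = r^2).
  { rewrite <- hz. rewrite pow2_sqrt; [ring|]. nra. }
  rewrite phi_eq. unfold Re; simpl fst.
  set (c := cos x) in *. set (s := sin x) in *. set (C := cosh y) in *. set (S := sinh y) in *.
  assert (hcs : c^2 + s^2 = 1) by (unfold c, s; rewrite <- (sin2_cos2 x); unfold Rsqr; ring).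
  assert (hCS : C^2 - S^2 = 1) by (apply cosh_sinh_sq).
  assert (eD : c*C*(c*C*1) + -(s*S)*(-(s*S)*1) = c^2 + S^2).
  { assert (e1 : c*C*(c*C*1) + -(s*S)*(-(s*S)*1) = c^2*C^2 + s^2*S^2) by ring. rewrite e1.
    assert (C^2 = 1 + S^2) by lra. assert (s^2 = 1 - c^2) by lra.
    rewrite H, H0. ring. }
  rewrite eD.
  assert (eN : (1+x)*(c*C) + y*(-(s*S)) = (1+x)*c*C - y*s*S) by ring.
  rewrite eN.
  assert (habs : Rabs x <= r).
  { apply Rabs_le; split; nra. }
  assert (hc : cos r <= c).
  { unfold c. assert (ea : cos x = cos (Rabs x)).
    { destruct (Rcase_abs x) as [h|h]; [rewrite (Rabs_left x h), cos_neg | rewrite (Rabs_right x h)]; reflexivity. }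
    rewrite ea. pose proof (cos_diff (Rabs x) r (conj (Rabs_pos x) habs) ltac:(lra)). lra. }
  assert (hD : cos r ^2 <= c^2 + S^2).
  { assert (cos r ^2 <= c^2) by (simpl; nra). assert (0 <= S^2) by (apply pow2_ge_0). lra. }
  assert (hD0 : 0 < c^2 + S^2) by (assert (0 < cos r ^2) by (apply pow_lt; lra); lra).
  set (D := c^2 + S^2) in *. set (N := (1+x)*c*C - y*s*S) in *.
  split.
  - pose proof (lower_all r x y (conj hr0 hr1) hxy) as hl. fold c s C S D N in hl.
    apply (Rmult_le_reg_r (cos r * D)). nra.
    assert (e1 : (1 - r) / cos r * (cos r * D) = (1-r)*D) by (field; lra).
    assert (e2 : N / D * (cos r * D) = cos r * N) by (field; lra).
    rewrite e1, e2. exact hl.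
  - assert (hN : (cos r * N) <= (1+r) * D).
    { set (A := (1+x)^2 + y^2).
      assert (hA : A <= (1+r)^2).
      { unfold A. assert (x <= r) by (pose proof (Rle_abs x); lra). nra. }
      assert (hL : N^2 <= A * D).
      { assert (e : A * D - N^2 = ((1+x)*(-(s*S)) - y*(c*C))^2).
        { unfold A, N. rewrite <- eD. ring. }
        pose proof (pow2_ge_0 ((1+x)*(-(s*S)) - y*(c*C))). lra. }
      assert (h2 : (cos r * N)^2 <= ((1+r)*D)^2).
      { assert (e : (cos r * N)^2 = cos r^2 * N^2) by ring. rewrite e.
        assert (cos r ^2 * N^2 <= cos r^2 * (A * D)) by (apply Rmult_le_compat_l; [apply pow2_ge_0| lra]).
        assert (cos r ^2 * (A*D) <= D * (A * D)) by (apply Rmult_le_compat_r; [nra | lra]).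
        assert (D * (A * D) <= D * ((1+r)^2 * D)) by (apply Rmult_le_compat_l; [lra | apply Rmult_le_compat_r; lra]).
        assert (e2 : ((1+r)*D)^2 = D * ((1+r)^2 * D)) by ring. lra. }
      assert (0 <= (1+r)*D) by nra.
      destruct (Rle_or_lt (cos r * N) ((1+r)*D)) as [h|h]; [exact h|].
      exfalso. assert (((1+r)*D)^2 < (cos r * N)^2) by (simpl; nra). lra. }
    apply (Rmult_le_reg_r (cos r * D)). nra.
    assert (e1 : (1 + r) / cos r * (cos r * D) = (1+r)*D) by (field; lra).
    assert (e2 : N / D * (cos r * D) = cos r * N) by (field; lra).
    rewrite e1, e2. exact hN.
Qed.
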